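(* Let $d\ge 1$, $T\ge 1$, let $\mathcal{X}\subseteq\mathbb{R}^d$ be a non-empty closed convex set containing $\mathbf{0}$, and let $0<\mu\le L$. Let $f_1,\dots,f_T:\mathcal{X}\to[0,\infty)$ be differentiable with $\frac{\mu}{2}\|y-x\|^2\le f_t(y)-f_t(x)-\langle\nabla f_t(x),y-x\rangle\le\frac{L}{2}\|y-x\|^2$ for all $t$ and $x,y\in\mathcal{X}$. With starting point $x_0=\mathbf{0}$, let $$C_{\mathsf{OPT}}=\min_{(x_1,\dots,x_T)\in\mathcal{X}^T}\sum_{t=1}^T\Big(f_t(x_t)+\frac12\|x_t-x_{t-1}\|^2\Big).$$ Then $$C_{\mathsf{OPT}}\ge\sum_{t=1}^T f_t(x_t^\star)+\frac{\mu}{2(\mu+4)}\big(\mathcal{P}_{2,T}^\star+\|x_1^\star\|^2\big).$$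
   Context: $x_t^\star=\arg\min_{x\in\mathcal{X}}f_t(x)$ and $\mathcal{P}_{2,T}^\star=\sum_{t=2}^T\|x_t^\star-x_{t-1}^\star\|^2$. *)

(* Defs.v *)
From HB Require Import structures.
From mathcomp Require Import all_boot all_order all_algebra.
From mathcomp Require Import all_classical all_reals all_analysis.
Set Implicit Arguments. Unset Strict Implicit. Unset Printing Implicit Defensive.
Import Order.TTheory GRing.Theory Num.Theory.
Import numFieldNormedType.Exports.
Local Open Scope ring_scope.
Local Open Scope classical_set_scope.

(* Euclidean inner product and squared Euclidean norm on R^d
   (the library norm on 'rV is the sup norm, so we define these explicitly). *)
Definition dotv {R : comRingType} {d : nat} (u v : 'rV[R]_d) : R :=
  \sum_(i < d) u 0 i * v 0 i.
Definition sqnorm {R : comRingType} {d : nat} (u : 'rV[R]_d) : R := dotv u u.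

Definition convex_subset {R : realType} {d : nat} (X : set 'rV[R]_d) : Prop :=
  forall (x y : 'rV[R]_d) (l : R), X x -> X y -> 0 <= l <= 1 ->
    X (l *: x + (1 - l) *: y).

(* Main.v *)
Require Import Defs.
From HB Require Import structures.
From mathcomp Require Import all_boot all_order all_algebra.
From mathcomp Require Import all_classical all_reals all_analysis.
From mathcomp Require Import ring lra.
Import Order.TTheory GRing.Theory Num.Theory.
Import numFieldNormedType.Exports.
Local Open Scope ring_scope.
Local Open Scope classical_set_scope.

Lemma sqnorm_ge0 (R : realType) d (u : 'rV[R]_d) : 0 <= sqnorm u.
Proof. by rewrite /sqnorm /dotv; apply: sumr_ge0 => i _; rewrite -expr2 sqr_ge0. Qed.

Lemma sqnormZ (R : realType) d (k : R) (u : 'rV[R]_d) :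
  sqnorm (k *: u) = k ^+ 2 * sqnorm u.
Proof.
rewrite /sqnorm /dotv mulr_sumr; apply: eq_bigr => i _; rewrite !mxE; ring.
Qed.

Lemma sqnorm3 (R : realType) d (m : R) (hm : 0 < m) (a b e : 'rV[R]_d) :
  m / (2 * (m + 4)) * sqnorm (a + b + e)
  <= 1 / 2 * sqnorm a + m / 4 * (sqnorm b + sqnorm e).
Proof.
rewrite /sqnorm /dotv !mulr_sumr -big_split mulr_sumr -big_split /=.
apply: ler_sum => i _; rewrite !mxE.
set A := a 0 i; set B := b 0 i; set E := e 0 i.
have h4 : 0 < m + 4 by lra.
have H : 0 <= (2 * A - m * B) ^+ 2 + (2 * A - m * E) ^+ 2 + 2 * m * (B - E) ^+ 2.
  by rewrite !addr_ge0 ?sqr_ge0 // mulr_ge0 ?sqr_ge0 // mulr_ge0 // ltW.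
rewrite -subr_ge0.
have -> : 1 / 2 * (A * A) + m / 4 * (B * B + E * E) - m / (2 * (m + 4)) * ((A + B + E) * (A + B + E))
  = ((2 * A - m * B) ^+ 2 + (2 * A - m * E) ^+ 2 + 2 * m * (B - E) ^+ 2) / (4 * (m + 4)).
  field; lra.
by apply: divr_ge0 => //; lra.
Qed.

Lemma eps_lemma (R : realType) (K F : R) :
  0 <= K -> (forall l : R, 0 < l <= 1 -> (1 - l) * K <= F) -> K <= F.
Proof.
move=> hK h; apply/ler_addgt0Pr => e he.
have hKe : 0 < K + e by lra.
have := h (e / (K + e)).
have -> : 1 - e / (K + e) = K / (K + e) by field; lra.
have Hl : 0 < e / (K + e) <= 1.
  apply/andP; split; first exact: divr_gt0.
  by rewrite ler_pdivrMr // mul1r; lra.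
move=> /(_ Hl) H.
have : K - F <= K - K / (K + e) * K by lra.
have -> : K - K / (K + e) * K = K / (K + e) * e by field; lra.
move=> H2; apply: (le_trans _ (_ : F + K / (K + e) * e <= F + e)).
  lra.
rewrite lerD2l; apply: ler_piMl; first lra.
by rewrite ler_pdivrMr // mul1r; lra.
Qed.

Lemma sc_min (R : realType) d (X : set 'rV[R]_d) (hXconv : convex_subset X)
  (mu : R) (hmu : 0 < mu) (g : 'rV[R]_d -> R)
  (hsc : forall x y, X x -> X y -> mu / 2 * sqnorm (y - x) <= g y - g x - 'd g x (y - x))
  xs (hxs : X xs) (hmin : forall x, X x -> g xs <= g x) x (hx : X x) :
  mu / 2 * sqnorm (x - xs) <= g x - g xs.
Proof.
apply: eps_lemma; first by rewrite mulr_ge0 ?sqnorm_ge0 // divr_ge0 // ltW.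
move=> l /andP[l0 l1].
set z := l *: x + (1 - l) *: xs.
have Xz : X z by apply: hXconv => //; rewrite ltW.
have e1 : x - z = (1 - l) *: (x - xs).
  by apply/matrixP => i j; rewrite !mxE; ring.
have e2 : xs - z = (- l) *: (x - xs).
  by apply/matrixP => i j; rewrite !mxE; ring.
have h1 := hsc _ _ Xz hx; have h2 := hsc _ _ Xz hxs.
rewrite e1 linearZ sqnormZ /= in h1.
rewrite e2 linearZ sqnormZ /= in h2.
have h3 := hmin _ Xz.
set s := sqnorm (x - xs) in h1 h2 *.
set D := 'd g z (x - xs) in h1 h2.
have h1' := ler_wpM2l (ltW l0) h1.
have h2' : (1 - l) * (mu / 2 * ((- l) ^+ 2 * s)) <= (1 - l) * (g xs - g z - - l * D).
  by apply: ler_wpM2l => //; lra.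
suff : l * ((1 - l) * (mu / 2 * s)) <= l * (g x - g xs).
  by rewrite ler_pM2l.
have E1 : l * ((1 - l) * (mu / 2 * s)) = l * (mu / 2 * ((1 - l) ^+ 2 * s)) + (1 - l) * (mu / 2 * ((- l) ^+ 2 * s)) by ring.
have E2 : l * (g x - g z - (1 - l) * D) + (1 - l) * (g xs - g z - - l * D) = l * (g x - g xs) + (g xs - g z) by ring.
rewrite E1; apply: (le_trans (lerD h1' h2')); rewrite E2; lra.
Qed.

Lemma sqnormB (R : realType) d (u v : 'rV[R]_d) : sqnorm (u - v) = sqnorm (v - u).
Proof. by rewrite /sqnorm /dotv; apply: eq_bigr => i _; rewrite !mxE; ring. Qed.

Theorem lemma5 (R : realType) (d T : nat) (hd : (1 <= d)%N) (hT : (1 <= T)%N)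
  (X : set 'rV[R]_d) (hX0 : X 0) (hXclosed : closed X) (hXconv : convex_subset X)
  (mu L : R) (hmu : 0 < mu) (hmuL : mu <= L)
  (f : nat -> 'rV[R]_d -> R)
  (hfnn : forall t x, (1 <= t <= T)%N -> X x -> 0 <= f t x)
  (hfdiff : forall t x, (1 <= t <= T)%N -> X x -> differentiable (f t) x)
  (hfsc : forall t x y, (1 <= t <= T)%N -> X x -> X y ->
     mu / 2 * sqnorm (y - x) <= f t y - f t x - 'd (f t) x (y - x))
  (hfsm : forall t x y, (1 <= t <= T)%N -> X x -> X y ->
     f t y - f t x - 'd (f t) x (y - x) <= L / 2 * sqnorm (y - x))
  (xstar : nat -> 'rV[R]_d)
  (hxstar : forall t, (1 <= t <= T)%N ->
     X (xstar t) /\ (forall x, X x -> f t (xstar t) <= f t x))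
  (x : nat -> 'rV[R]_d) (hx0 : x 0%N = 0)
  (hx : forall t, (1 <= t <= T)%N -> X (x t)) :
  \sum_(1 <= t < T.+1) f t (xstar t)
    + mu / (2 * (mu + 4)) *
        (\sum_(2 <= t < T.+1) sqnorm (xstar t - xstar t.-1) + sqnorm (xstar 1%N))
  <= \sum_(1 <= t < T.+1) (f t (x t) + 1 / 2 * sqnorm (x t - x t.-1)).
Proof.
pose y t := if t == 0%N then 0 else xstar t.
pose g t := mu / 4 * sqnorm (x t - y t).
pose c := mu / (2 * (mu + 4)).
have step1 : \sum_(1 <= t < T.+1) f t (xstar t)
    + c * (\sum_(2 <= t < T.+1) sqnorm (xstar t - xstar t.-1) + sqnorm (xstar 1%N))
  = \sum_(1 <= t < T.+1) (f t (xstar t) + c * sqnorm (y t - y t.-1)).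
  rewrite big_split /= -mulr_sumr; congr (_ + c * _).
  rewrite (@big_ltn _ _ _ 1 T.+1) // /y /= subr0 addrC; congr (_ + _).
  apply: eq_big_nat => t /andP[t2 _].
  have -> : (t == 0%N) = false by case: t t2.
  by have -> : (t.-1 == 0%N) = false by case: t t2 => [|[]].
rewrite -/c step1.
have step2 : forall t, (1 <= t < T.+1)%N ->
  f t (xstar t) + c * sqnorm (y t - y t.-1)
  <= f t (x t) + 1 / 2 * sqnorm (x t - x t.-1) + (g t.-1 - g t).
  move=> t /andP[t1 tT].
  have htT : (1 <= t <= T)%N by rewrite t1.
  have yt : y t = xstar t by rewrite /y; case: t t1 {tT htT}.
  have [Xs hmin] := hxstar t htT.
  have hsc := @sc_min _ _ X hXconv mu hmu (f t) (fun a b => hfsc t a b htT) _ Xs hmin _ (hx t htT).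
  have e : y t - y t.-1 = (x t - x t.-1) + (y t - x t) + (x t.-1 - y t.-1).
    by apply/matrixP => i j; rewrite !mxE; ring.
  have h3 := @sqnorm3 R d mu hmu (x t - x t.-1) (y t - x t) (x t.-1 - y t.-1).
  rewrite -e -/c (@sqnormB R d (y t) (x t)) yt in h3.
  rewrite /g yt; move: hsc h3.
  set A := sqnorm (x t - xstar t); set B := sqnorm (x t.-1 - y t.-1).
  lra.
apply: (le_trans (ler_sum_nat step2)).
rewrite big_split /= gerDl.
have -> : \sum_(1 <= i < T.+1) (g i.-1 - g i) = - (\sum_(0 <= i < T) (g i.+1 - g i)).
  by rewrite big_add1 /= -sumrN; apply: eq_bigr => i _; rewrite opprB.
rewrite telescope_sumr // /g /y /= hx0 subr0.
have : 0 <= mu / 4 * sqnorm (x T - (if T == 0%N then 0 else xstar T)).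
  by rewrite mulr_ge0 ?sqnorm_ge0 // divr_ge0 // ltW.
have -> : sqnorm (0 : 'rV[R]_d) = 0 by rewrite /sqnorm /dotv big1 // => i _; rewrite mxE mul0r.
lra.
Qed.
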